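(* Let $N\ge 1$, $p\ge 1$ and $\varepsilon>0$. For $i=1,\dots,N$ let $f_i:\mathbb R^p\to\mathbb R$ be convex and smooth and $g_i:\mathbb R^p\to\mathbb R$ be convex (possibly non-smooth), and suppose $F_i=f_i+g_i$ is Lipschitz continuous with Lipschitz constant $L_i$, i.e. $|F_i(y)-F_i(z)|\le L_i\|y-z\|$ for all $y,z\in\mathbb R^p$. Let $x^\ast$ be an optimal solution of $$\text{minimize}_{x\in\mathbb R^p}\ \frac1N\sum_{i=1}^N F_i(x),$$ and let $(x^\ast_{\mathrm{rel}},x^{1,\ast},\dots,x^{N,\ast})$ be an optimal solution of the relaxed problem $$\text{minimize}_{x,x^1,\dots,x^N\in\mathbb R^p}\ \frac1N\sum_{i=1}^N F_i(x^i)\quad\text{subject to}\quad \|x-x^i\|^2\le\varepsilon^2,\ i=1,\dots,N.$$ Then, with $L=\sum_{i=1}^N L_i$, $$\frac1N\sum_{i=1}^N\bigl(F_i(x^\ast_{\mathrm{rel}})-F_i(x^\ast)\bigr)\le \frac{\varepsilon}{N}L.$$ Furthermore, if the cost function $\frac1N\sum_{i=1}^N F_i$ is strongly convex with modulus $m>0$, then $$\|x^\ast_{\mathrm{rel}}-x^\ast\|^2\le \frac{2\varepsilon L}{Nm}.$$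
   Context: $\|\cdot\|$ denotes the Euclidean norm on $\mathbb R^p$. Strong convexity with modulus $m$ of a function $\phi$ means $\phi(y)\ge\phi(z)+g^T(y-z)+\frac m2\|y-z\|^2$ for all $y,z$ and all subgradients $g$ of $\phi$ at $z$. *)

(* Defs.v *)
From HB Require Import structures.
From mathcomp Require Import all_boot all_order all_algebra.
From mathcomp Require Import all_classical all_reals all_analysis.
Set Implicit Arguments. Unset Strict Implicit. Unset Printing Implicit Defensive.
Import Order.TTheory GRing.Theory Num.Theory.
Import numFieldNormedType.Exports.
Local Open Scope ring_scope.

Definition dotv {R : realType} {p : nat} (u v : 'rV[R]_p) : R :=
  \sum_(i < p) u ord0 i * v ord0 i.
Definition enorm {R : realType} {p : nat} (v : 'rV[R]_p) : R :=
  Num.sqrt (dotv v v).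

Definition convex_fun {R : realType} {p : nat} (f : 'rV[R]_p -> R) : Prop :=
  forall (x y : 'rV[R]_p) (t : R), 0 <= t -> t <= 1 ->
    f (t *: x + (1 - t) *: y) <= t * f x + (1 - t) * f y.

Definition smooth_fun {R : realType} {p : nat} (f : 'rV[R]_p -> R) : Prop :=
  forall x : 'rV[R]_p, differentiable f x.

Definition lipschitz_with {R : realType} {p : nat} (F : 'rV[R]_p -> R) (L : R) : Prop :=
  forall y z : 'rV[R]_p, `|F y - F z| <= L * enorm (y - z).

Definition subgradient {R : realType} {p : nat} (phi : 'rV[R]_p -> R) (z g : 'rV[R]_p) : Prop :=
  forall y, phi z + dotv g (y - z) <= phi y.

Definition strongly_convex {R : realType} {p : nat} (m : R) (phi : 'rV[R]_p -> R) : Prop :=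
  forall (y z g : 'rV[R]_p), subgradient phi z g ->
    phi z + dotv g (y - z) + m / 2 * enorm (y - z) ^+ 2 <= phi y.

Definition avg_cost {R : realType} {p N : nat} (F : 'I_N -> 'rV[R]_p -> R) (x : 'rV[R]_p) : R :=
  N%:R^-1 * \sum_(i < N) F i x.

Definition relaxed_cost {R : realType} {p N : nat} (F : 'I_N -> 'rV[R]_p -> R)
  (xs : 'I_N -> 'rV[R]_p) : R :=
  N%:R^-1 * \sum_(i < N) F i (xs i).

Definition relaxed_feasible {R : realType} {p N : nat} (eps : R) (x : 'rV[R]_p)
  (xs : 'I_N -> 'rV[R]_p) : Prop :=
  forall i : 'I_N, enorm (x - xs i) ^+ 2 <= eps ^+ 2.

(* Main.v *)
Require Import Defs.
From HB Require Import structures.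
From mathcomp Require Import all_boot all_order all_algebra.
From mathcomp Require Import all_classical all_reals all_analysis.
From mathcomp Require Import ring lra.
Import Order.TTheory GRing.Theory Num.Theory.
Import numFieldNormedType.Exports.
Local Open Scope ring_scope.

Theorem theorem1 (R : realType) (N p : nat) (eps : R)
  (f g : 'I_N -> 'rV[R]_p -> R) (L : 'I_N -> R)
  (xstar xrel : 'rV[R]_p) (xs : 'I_N -> 'rV[R]_p) :
  (1 <= N)%N -> (1 <= p)%N -> 0 < eps ->
  (forall i, convex_fun (f i)) ->
  (forall i, smooth_fun (f i)) ->
  (forall i, convex_fun (g i)) ->
  (forall i, lipschitz_with (fun x => f i x + g i x) (L i)) ->
  (forall x, avg_cost (fun i x => f i x + g i x) xstar
             <= avg_cost (fun i x => f i x + g i x) x) ->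
  relaxed_feasible eps xrel xs ->
  (forall (x : 'rV[R]_p) (ys : 'I_N -> 'rV[R]_p), relaxed_feasible eps x ys ->
     relaxed_cost (fun i x => f i x + g i x) xs
     <= relaxed_cost (fun i x => f i x + g i x) ys) ->
  N%:R^-1 * \sum_(i < N) ((f i xrel + g i xrel) - (f i xstar + g i xstar))
    <= eps / N%:R * \sum_(i < N) L i
  /\
  (forall m : R, 0 < m ->
     strongly_convex m (avg_cost (fun i x => f i x + g i x)) ->
     enorm (xrel - xstar) ^+ 2 <= 2 * eps * (\sum_(i < N) L i) / (N%:R * m)).
Proof.
move=> N1 p1 eps0 _ _ _ Lip Opt Feas Rel.
set F := (fun i x => f i x + g i x).
have Npos : 0 < N%:R :> R by rewrite ltr0n.
have Ninv : 0 < N%:R^-1 :> R by rewrite invr_gt0.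
have enorm_ge0 : forall v : 'rV[R]_p, 0 <= enorm v by move=> v; exact: sqrtr_ge0.
have Lge0 : forall i, 0 <= L i.
  move=> i.
  have e1 : 0 < enorm (const_mx 1 - 0 : 'rV[R]_p).
    rewrite /enorm sqrtr_gt0 /dotv subr0.
    rewrite (eq_bigr (fun _ => 1)); last by move=> j _; rewrite mxE mulr1.
    by rewrite sumr_const card_ord ltr0n.
  have := Lip i (const_mx 1) 0.
  move=> H; have H2 := le_trans (normr_ge0 _) H.
  by rewrite pmulr_lge0 in H2.
have Hi : forall i, F i xrel - F i xstar <= (F i (xs i) - F i xstar) + L i * eps.
  move=> i.
  have h1 := Lip i xrel (xs i).
  have h2 : enorm (xrel - xs i) <= eps.
    have := Feas i; have := enorm_ge0 (xrel - xs i).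
    move: (enorm (xrel - xs i)) => e he hf; nra.
  have h3 : L i * enorm (xrel - xs i) <= L i * eps by apply: ler_wpM2l.
  have h4 := ler_norm (F i xrel - F i (xs i)).
  rewrite /F /= in h1 h4 *. lra.
have Sum1 : \sum_(i < N) (F i xrel - F i xstar)
   <= \sum_(i < N) (F i (xs i) - F i xstar) + eps * \sum_(i < N) L i.
  rewrite mulr_sumr -big_split /=; apply: ler_sum => i _.
  by rewrite (mulrC eps); apply: Hi.
have Sum2 : \sum_(i < N) (F i (xs i) - F i xstar) <= 0.
  have := Rel xstar (fun _ => xstar).
  rewrite /relaxed_feasible subrr /enorm /dotv big1 ?sqrtr0; last first.
    by move=> j _; rewrite mxE mul0r.
  move=> /(_ (fun _ => ltac:(rewrite expr0n /=; exact: ltW (exprn_gt0 2 eps0)))).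
  rewrite /relaxed_cost ler_pM2l // sumrB subr_le0.
  exact.
have Part1 : N%:R^-1 * \sum_(i < N) (F i xrel - F i xstar)
    <= eps / N%:R * \sum_(i < N) L i.
  have -> : eps / N%:R * \sum_(i < N) L i = N%:R^-1 * (eps * \sum_(i < N) L i).
    by rewrite mulrAC mulrC mulrA.
  apply: ler_wpM2l; first exact: ltW.
  lra.
split; first exact: Part1.
move=> m m0 SC.
have sg : subgradient (avg_cost F) xstar 0.
  move=> y; rewrite /dotv big1 ?addr0; first exact: Opt.
  by move=> j _; rewrite mxE mul0r.
have := SC xrel xstar 0 sg.
rewrite /dotv big1 ?addr0; last by move=> j _; rewrite mxE mul0r.
have Hd : avg_cost F xrel - avg_cost F xstar
   = N%:R^-1 * \sum_(i < N) (F i xrel - F i xstar).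
  by rewrite /avg_cost -mulrBr -sumrB.
move: Part1 Hd; set S := N%:R^-1 * _; set e := enorm _ ^+ 2; move=> P1 Hd P2.
rewrite ler_pdivlMr ?mulr_gt0 //.
have -> : 2 * eps * \sum_(i < N) L i = 2 * N%:R * (eps / N%:R * \sum_(i < N) L i).
  by field; rewrite lt0r_neq0.
have : m / 2 * e <= eps / N%:R * \sum_(i < N) L i.
  apply: le_trans P1; by rewrite -Hd lerBrDl.
move: (eps / N%:R * _) => T H.
have -> : e * (N%:R * m) = 2 * N%:R * (m / 2 * e) by field.
apply: ler_wpM2l => //; rewrite mulr_ge0 //; exact: ltW.
Qed.
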